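(* Let $(M,\Delta,S,\varepsilon)$ be a weak Kac algebra and let $\pi_\varepsilon$ be its counital representation. Then for every unital $*$-representation $\rho$ of $M$ on a finite-dimensional Hilbert space, the representations $\pi_\varepsilon\times\rho$ and $\rho\times\pi_\varepsilon$ are both unitarily equivalent to $\rho$ (i.e., the class of $\pi_\varepsilon$ is a unit of the representation ring of $M$).
   Context: All algebras are finite-dimensional over $\mathbb{C}$; $\varsigma$ denotes the flip and $\mu(x\otimes y)=xy$. A weak Kac algebra is a quadruple $(M,\Delta,S,\varepsilon)$ where $M$ is a finite-dimensional $C^*$-algebra; $\Delta:M\to M\otimes M$ is an injective, not necessarily unital, $*$-homomorphism with $(\Delta\otimes\mathrm{id})\Delta=(\mathrm{id}\otimes\Delta)\Delta$; $S:M\to M$ is a linear, unital, antimultiplicative, $*$-preserving bijection with $S^2=\mathrm{id}$ and $(S\otimes S)\circ\Delta=\varsigma\circ\Delta\circ S$; and $\varepsilon:M\to\mathbb{C}$ is linear with $(\varepsilon\otimes\mathrm{id})\Delta=(\mathrm{id}\otimes\varepsilon)\Delta=\mathrm{id}$, $\varepsilon\circ S=\varepsilon$, $\varepsilon(x^* )=\overline{\varepsilon(x)}$, $(\varepsilon\otimes\varepsilon)((x\otimes1)e(1\otimes y))=\varepsilon(xy)$ for all $x,y$, where $e:=\Delta(1)$, and $(\varepsilon_s\otimes\mathrm{id})\Delta(x)=(1\otimes x)e$ for all $x$, where $\varepsilon_s:=\mu(S\otimes\mathrm{id})\Delta$. Let $\varepsilon_t:=\mu(\mathrm{id}\otimes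 S)\Delta$ and $N_t=\{x\in M:\Delta(x)=e(x\otimes1)=(x\otimes1)e\}$. The functional $\varepsilon$ is positive, and the counital representation $\pi_\varepsilon$ is the GNS representation of $\varepsilon$; concretely it acts on the Hilbert space $N_t$ with inner product $(x,y)=\varepsilon(y^*x)$ by $\pi_\varepsilon(x)\varepsilon_t(y)=\varepsilon_t(xy)$. For representations $\rho_i:M\to B(H_i)$, $i=1,2$, the product $\rho_1\times\rho_2$ is the representation $x\mapsto(\rho_1\otimes\rho_2)(\Delta(x))$ on the subspace $(\rho_1\otimes\rho_2)(e)(H_1\otimes H_2)$. *)

(* Defs.v *)
(* A finite-dimensional C*-algebra is modelled as a unital *-subalgebra M
   of the matrix algebra 'M[R[i]]_n (every f.d. C*-algebra arises so);
   M (x) M is the span of the Kronecker products a *t b (a, b in M) inside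
   'M_(n*n).  Linear maps on M are given as globally linear maps on 'M_n
   (any linear map on M extends); all axioms are only imposed on M.      *)
From HB Require Import structures.
From mathcomp Require Import all_boot all_order all_algebra.
From mathcomp Require Import complex mxtens.
From mathcomp Require Import reals.

Set Implicit Arguments.
Unset Strict Implicit.
Unset Printing Implicit Defensive.
Import Order.TTheory GRing.Theory Num.Theory.
Local Open Scope ring_scope.

Section WeakKac.
Variable R : realType.
Local Notation C := (R[i]).

Definition adj {m p} (A : 'M[C]_(m, p)) : 'M[C]_(p, m) := (map_mx (@conjc R) A)^T.

Definition pidx {m p} (i : 'I_m) (j : 'I_p) : 'I_(m * p) := mxtens_index (i, j).

Definition E {n} (i j : 'I_n) : 'M[C]_n := delta_mx i j.

Definition lin {m p q r} (f : 'M[C]_(m, p) -> 'M[C]_(q, r)) :=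
  forall (a : C) x y, f (a *: x + y) = a *: f x + f y.
Definition linf {m p} (f : 'M[C]_(m, p) -> C) :=
  forall (a : C) x y, f (a *: x + y) = a * f x + f y.

(* f (x) g : M_n (x) M_n -> M_p (x) M_q, linear extension of a (x) b |-> f a (x) g b *)
Definition tmap {n p q} (f : 'M[C]_n -> 'M[C]_p) (g : 'M[C]_n -> 'M[C]_q)
  (X : 'M[C]_(n * n)) : 'M[C]_(p * q) :=
  \sum_(i < n) \sum_(j < n) \sum_(k < n) \sum_(l < n)
     X (pidx i k) (pidx j l) *: (f (E i j) *t g (E k l)).

(* (phi (x) id) and (id (x) phi) for a functional phi *)
Definition lslot {n} (phi : 'M[C]_n -> C) (X : 'M[C]_(n * n)) : 'M[C]_n :=
  \matrix_(k, l) \sum_(i < n) \sum_(j < n) X (pidx i k) (pidx j l) * phi (E i j).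
Definition rslot {n} (phi : 'M[C]_n -> C) (X : 'M[C]_(n * n)) : 'M[C]_n :=
  \matrix_(i, j) \sum_(k < n) \sum_(l < n) X (pidx i k) (pidx j l) * phi (E k l).
(* phi (x) psi *)
Definition tscal {n} (phi psi : 'M[C]_n -> C) (X : 'M[C]_(n * n)) : C :=
  \sum_(i < n) \sum_(j < n) \sum_(k < n) \sum_(l < n)
     X (pidx i k) (pidx j l) * phi (E i j) * psi (E k l).
(* multiplication mu (x (x) y) = x y *)
Definition mu {n} (X : 'M[C]_(n * n)) : 'M[C]_n :=
  \sum_(i < n) \sum_(j < n) \sum_(k < n) \sum_(l < n)
     X (pidx i k) (pidx j l) *: (E i j *m E k l).
(* the flip varsigma (x (x) y) = y (x) x *)
Definition flip {n} (X : 'M[C]_(n * n)) : 'M[C]_(n * n) :=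
  \sum_(i < n) \sum_(j < n) \sum_(k < n) \sum_(l < n)
     X (pidx i k) (pidx j l) *: (E k l *t E i j).

Definition eps_s {n} (S : 'M[C]_n -> 'M[C]_n) (D : 'M[C]_n -> 'M[C]_(n * n)) x :=
  mu (tmap S id (D x)).
Definition eps_t {n} (S : 'M[C]_n -> 'M[C]_n) (D : 'M[C]_n -> 'M[C]_(n * n)) x :=
  mu (tmap id S (D x)).

Definition star_subalg {n} (M : 'M[C]_n -> Prop) :=
  [/\ M 1%:M, (forall (a : C) x y, M x -> M y -> M (a *: x + y)),
      (forall x y, M x -> M y -> M (x *m y)) & (forall x, M x -> M (adj x))].

Definition in_tens {n} (M : 'M[C]_n -> Prop) (X : 'M[C]_(n * n)) :=
  exists k (a b : 'I_k -> 'M[C]_n),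
    (forall t, M (a t) /\ M (b t)) /\ X = \sum_(t < k) (a t *t b t).

Record weak_Kac {n} (M : 'M[C]_n -> Prop) (D : 'M[C]_n -> 'M[C]_(n * n))
    (S : 'M[C]_n -> 'M[C]_n) (eps : 'M[C]_n -> C) : Prop := WeakKac {
  wk_alg : star_subalg M;
  wk_Dlin : lin D;
  wk_DM : forall x, M x -> in_tens M (D x);
  wk_Dmul : forall x y, M x -> M y -> D (x *m y) = D x *m D y;
  wk_Dadj : forall x, M x -> D (adj x) = adj (D x);
  wk_Dinj : forall x y, M x -> M y -> D x = D y -> x = y;
  wk_coassoc : forall x, M x -> forall i j k i' j' k',
     tmap D id (D x) (pidx (pidx i j) k) (pidx (pidx i' j') k')
   = tmap id D (D x) (pidx i (pidx j k)) (pidx i' (pidx j' k'));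
  wk_Slin : lin S;
  wk_SM : forall x, M x -> M (S x);
  wk_S1 : S 1%:M = 1%:M;
  wk_Smul : forall x y, M x -> M y -> S (x *m y) = S y *m S x;
  wk_Sadj : forall x, M x -> S (adj x) = adj (S x);
  wk_SS : forall x, M x -> S (S x) = x;
  wk_SD : forall x, M x -> tmap S S (D x) = flip (D (S x));
  wk_elin : linf eps;
  wk_eDl : forall x, M x -> lslot eps (D x) = x;
  wk_eDr : forall x, M x -> rslot eps (D x) = x;
  wk_eS : forall x, M x -> eps (S x) = eps x;
  wk_eadj : forall x, M x -> eps (adj x) = conjc (eps x);
  wk_ee : forall x y, M x -> M y ->
     tscal eps eps ((x *t 1%:M) *m D 1%:M *m (1%:M *t y)) = eps (x *m y);
  wk_es : forall x, M x -> tmap (eps_s S D) id (D x) = (1%:M *t x) *m D 1%:M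
}.

Definition Nt {n} (M : 'M[C]_n -> Prop) (D : 'M[C]_n -> 'M[C]_(n * n)) x :=
  [/\ M x, D x = D 1%:M *m (x *t 1%:M) & D x = (x *t 1%:M) *m D 1%:M].

(* A (finite-dimensional) representation: a subspace [rspace] of the column
   space C^rdim, an inner product <u,v> = v^* G u given by the Gram matrix
   [rgram], and the action x |-> ract x (a matrix acting on columns). *)
Record rep (n : nat) := Rep {
  rdim : nat;
  rspace : 'cV[C]_rdim -> Prop;
  rgram : 'M[C]_rdim;
  ract : 'M[C]_n -> 'M[C]_rdim }.

Arguments rdim {n} r.
Arguments rspace {n} r _.
Arguments rgram {n} r.
Arguments ract {n} r _.

Definition ip {n} (r : rep n) (u v : 'cV[C]_(rdim r)) : C :=
  (adj v *m rgram r *m u) 0 0.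
Arguments ip {n} r u v.

(* a representation on the Hilbert space C^d (standard inner product) *)
Definition hilb_rep {n d} (rho : 'M[C]_n -> 'M[C]_d) : rep n :=
  @Rep n d (fun _ => True) 1%:M rho.

Definition unital_star_rep {n d} (M : 'M[C]_n -> Prop) (rho : 'M[C]_n -> 'M[C]_d) :=
  [/\ lin rho, rho 1%:M = 1%:M,
      (forall x y, M x -> M y -> rho (x *m y) = rho x *m rho y) &
      (forall x, M x -> rho (adj x) = adj (rho x))].

Definition cvec {n} (x : 'M[C]_n) : 'cV[C]_(n * n) := (mxvec x)^T.
Definition Eb {n} (b : 'I_(n * n)) : 'M[C]_n := vec_mx (delta_mx 0 b).

(* the counital representation pi_eps : on N_t with inner product
   (x, y) = eps (y^* x), pi_eps(x) v = eps_t (x v) for v in N_t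
   (i.e. pi_eps(x) eps_t(y) = eps_t(x y)), transported to coordinates *)
Definition counital_rep {n} (M : 'M[C]_n -> Prop) (D : 'M[C]_n -> 'M[C]_(n * n))
    (S : 'M[C]_n -> 'M[C]_n) (eps : 'M[C]_n -> C) : rep n :=
  @Rep n (n * n)
    (fun v => exists x, Nt M D x /\ v = cvec x)
    (\matrix_(a, b) eps (adj (Eb a) *m Eb b))
    (fun x => \matrix_(a, b) (cvec (eps_t S D (x *m Eb b))) a 0).

Definition tens_span {d1 d2} (W1 : 'cV[C]_d1 -> Prop) (W2 : 'cV[C]_d2 -> Prop)
    (w : 'cV[C]_(d1 * d2)) :=
  exists k (u : 'I_k -> 'cV[C]_d1) (v : 'I_k -> 'cV[C]_d2),
    (forall t, W1 (u t) /\ W2 (v t)) /\ w = \sum_(t < k) (u t *t v t).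

(* product rho1 x rho2 : x |-> (rho1 (x) rho2)(D x) on (rho1 (x) rho2)(e)(H1 (x) H2) *)
Definition prod_rep {n} (D : 'M[C]_n -> 'M[C]_(n * n)) (r1 r2 : rep n) : rep n :=
  @Rep n (rdim r1 * rdim r2)
    (fun v => exists w, tens_span (rspace r1) (rspace r2) w /\
                        v = tmap (ract r1) (ract r2) (D 1%:M) *m w)
    (rgram r1 *t rgram r2)
    (fun x => tmap (ract r1) (ract r2) (D x)).

Definition unit_equiv {n} (M : 'M[C]_n -> Prop) (r1 r2 : rep n) :=
  exists U : 'M[C]_(rdim r2, rdim r1),
  [/\ forall u, rspace r1 u -> rspace r2 (U *m u),
      forall v, rspace r2 v -> exists2 u, rspace r1 u & U *m u = v,
      forall u u', rspace r1 u -> rspace r1 u' -> U *m u = U *m u' -> u = u',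
      forall u u', rspace r1 u -> rspace r1 u' ->
                   ip r2 (U *m u) (U *m u') = ip r1 u u'
    & forall x u, M x -> rspace r1 u ->
                  U *m (ract r1 x *m u) = ract r2 x *m (U *m u)].

End WeakKac.

(* Main.v *)
Require Import Defs.
From HB Require Import structures.
From mathcomp Require Import all_boot all_order all_algebra.
From mathcomp Require Import complex mxtens.
From mathcomp Require Import reals.
Set Implicit Arguments.
Unset Strict Implicit.
Unset Printing Implicit Defensive.
Import Order.TTheory GRing.Theory Num.Theory.
Local Open Scope ring_scope.


Section Infra.
Variable R : realType.
Local Notation C := (R[i]).
Local Notation E := (@E R _).
Local Notation Eb := (@Eb R _).

Section Lin.
Variables (m p q r : nat) (f : 'M[C]_(m, p) -> 'M[C]_(q, r)).
Hypothesis hf : lin f.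
Lemma lin0 : f 0 = 0.
Proof. have h := hf 1 0 0; rewrite !scale1r !addr0 in h. by apply: (addrI (f 0)); rewrite addr0 -h. Qed.
Lemma linD x y : f (x + y) = f x + f y.
Proof. by have := hf 1 x y; rewrite !scale1r. Qed.
Lemma linZ a x : f (a *: x) = a *: f x.
Proof. by rewrite -[a *: x]addr0 hf lin0 addr0. Qed.
Lemma lin_sum I (s : seq I) (P : pred I) (F : I -> 'M_(m, p)) :
  f (\sum_(i <- s | P i) F i) = \sum_(i <- s | P i) f (F i).
Proof. by elim/big_rec2: _ => [|i y1 y2 _ <-]; rewrite ?lin0 ?linD. Qed.
Lemma linB x y : f (x - y) = f x - f y.
Proof. by apply: (addIr (f y)); rewrite -linD !subrK. Qed.
End Lin.

Section Linf.
Variables (m p : nat) (f : 'M[C]_(m, p) -> C).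
Hypothesis hf : linf f.
Lemma linf0 : f 0 = 0.
Proof. have h := hf 1 0 0; rewrite scale1r !addr0 mul1r in h. by apply: (addrI (f 0)); rewrite addr0 -h. Qed.
Lemma linfD x y : f (x + y) = f x + f y.
Proof. by have := hf 1 x y; rewrite scale1r mul1r. Qed.
Lemma linfZ a x : f (a *: x) = a * f x.
Proof. by rewrite -[a *: x]addr0 hf linf0 addr0. Qed.
Lemma linf_sum I (s : seq I) (P : pred I) (F : I -> 'M_(m, p)) :
  f (\sum_(i <- s | P i) F i) = \sum_(i <- s | P i) f (F i).
Proof. by elim/big_rec2: _ => [|i y1 y2 _ <-]; rewrite ?linf0 ?linfD. Qed.
End Linf.


Lemma cadjE m p (A : 'M[C]_(m, p)) i j : adj A i j = conjc (A j i).
Proof. by rewrite /adj !mxE. Qed.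
Lemma cadjM m p q (A : 'M[C]_(m, p)) (B : 'M[C]_(p, q)) : adj (A *m B) = adj B *m adj A.
Proof.
apply/matrixP=> i j; rewrite cadjE !mxE rmorph_sum; apply: eq_bigr => k _.
by rewrite !cadjE rmorphM mulrC.
Qed.
Lemma cadjK m p (A : 'M[C]_(m, p)) : adj (adj A) = A.
Proof. by apply/matrixP=> i j; rewrite !cadjE conjcK. Qed.
Lemma cadjD m p (A B : 'M[C]_(m, p)) : adj (A + B) = adj A + adj B.
Proof. by apply/matrixP=> i j; rewrite [LHS]cadjE [RHS]mxE !cadjE mxE rmorphD. Qed.
Lemma cadjZ m p a (A : 'M[C]_(m, p)) : adj (a *: A) = conjc a *: adj A.
Proof. by apply/matrixP=> i j; rewrite [LHS]cadjE [RHS]mxE !cadjE mxE rmorphM. Qed.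
Lemma cadj0 m p : adj (0 : 'M[C]_(m, p)) = 0.
Proof. by apply/matrixP=> i j; rewrite cadjE !mxE rmorph0. Qed.
Lemma cadj_sum m p I (s : seq I) (P : pred I) (F : I -> 'M[C]_(m, p)) :
  adj (\sum_(i <- s | P i) F i) = \sum_(i <- s | P i) adj (F i).
Proof. by elim/big_rec2: _ => [|i y1 y2 _ <-]; rewrite ?cadj0 ?cadjD. Qed.
Lemma cadj1 m : adj (1%:M : 'M[C]_m) = 1%:M.
Proof. by apply/matrixP=> i j; rewrite !cadjE !mxE eq_sym; case: (i == j); rewrite ?rmorph0 ?rmorph1. Qed.
Lemma cadj_tens m p q r (A : 'M[C]_(m, p)) (B : 'M[C]_(q, r)) : adj (A *t B) = adj A *t adj B.
Proof. by rewrite /adj map_mxT trmx_tens. Qed.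
Lemma cadj_lin m p : forall a (x y : 'M[C]_(m, p)), adj (a *: x + y) = conjc a *: adj x + adj y.
Proof. by move=> a x y; rewrite cadjD cadjZ. Qed.

Lemma sum_pidx (V : nmodType) m p (F : 'I_(m * p) -> V) :
  \sum_(q < m * p) F q = \sum_(i < m) \sum_(j < p) F (pidx i j).
Proof.
rewrite pair_big /=.
rewrite (reindex (@mxtens_index m p)) /=; last first.
  by exists (@mxtens_unindex m p) => x _; rewrite ?mxtens_indexK ?mxtens_unindexK.
by apply: eq_bigr => -[i j] _.
Qed.

Lemma tensE m p q r (A : 'M[C]_(m, p)) (B : 'M[C]_(q, r)) i k j l :
  (A *t B) (pidx i k) (pidx j l) = A i j * B k l.
Proof. by rewrite /pidx tensmxE. Qed.

Section TensLin.
Variables m p q r : nat.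
Implicit Types (A : 'M[C]_(m, p)) (B : 'M[C]_(q, r)).
Lemma tensDl A1 A2 B : (A1 + A2) *t B = A1 *t B + A2 *t B.
Proof. by apply/matrixP=> x y; rewrite !mxE mulrDl. Qed.
Lemma tensDr A B1 B2 : A *t (B1 + B2) = A *t B1 + A *t B2.
Proof. by apply/matrixP=> x y; rewrite !mxE mulrDr. Qed.
Lemma tensZl a A B : (a *: A) *t B = a *: (A *t B).
Proof. by apply/matrixP=> x y; rewrite !mxE mulrA. Qed.
Lemma tensZr a A B : A *t (a *: B) = a *: (A *t B).
Proof. by apply/matrixP=> x y; rewrite !mxE mulrCA. Qed.
Lemma tens_suml I (s : seq I) (P : pred I) (F : I -> 'M[C]_(m, p)) B :
  (\sum_(i <- s | P i) F i) *t B = \sum_(i <- s | P i) (F i *t B).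
Proof. by elim/big_rec2: _ => [|i y1 y2 _ <-]; rewrite ?tens0mx ?tensDl. Qed.
Lemma tens_sumr I (s : seq I) (P : pred I) (F : I -> 'M[C]_(q, r)) A :
  A *t (\sum_(i <- s | P i) F i) = \sum_(i <- s | P i) (A *t F i).
Proof. by elim/big_rec2: _ => [|i y1 y2 _ <-]; rewrite ?tensmx0 ?tensDr. Qed.
End TensLin.

Lemma tens_mul m n p q r s (A : 'M[C]_(m,n)) (B : 'M[C]_(p,q)) (C' : 'M[C]_(n, r)) (D : 'M[C]_(q, s)) :
  (A *t B) *m (C' *t D) = (A *m C') *t (B *m D).
Proof. exact: tensmx_mul. Qed.

Lemma tens11 m p : (1%:M : 'M[C]_m) *t (1%:M : 'M[C]_p) = 1%:M.
Proof.
apply/matrixP=> x y; case: (mxtens_indexP x) => i k; case: (mxtens_indexP y) => j l.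
rewrite tensmxE !mxE (inj_eq (can_inj (@mxtens_indexK _ _))) xpair_eqE.
by case: (i == j); case: (k == l); rewrite ?mulr1n ?mulr0n ?mulr1 ?mulr0.
Qed.

Lemma mat_decomp m (x : 'M[C]_m) : x = \sum_(i < m) \sum_(j < m) x i j *: E i j.
Proof. exact: matrix_sum_delta. Qed.

Lemma tens_delta m p q r (i : 'I_m) (j : 'I_p) (k : 'I_q) (l : 'I_r) :
  delta_mx i j *t delta_mx k l = delta_mx (pidx i k) (pidx j l) :> 'M[C]_(m * q, p * r).
Proof.
apply/matrixP=> x y; case: (mxtens_indexP x) => i0 k0; case: (mxtens_indexP y) => j0 l0.
rewrite tensmxE !mxE /pidx !(inj_eq (can_inj (@mxtens_indexK _ _))) !xpair_eqE.
by case: (i0 == i); case: (j0 == j); case: (k0 == k); case: (l0 == l); rewrite ?mulr1n ?mulr0n ?mulr1 ?mulr0.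
Qed.

Lemma tens_decomp m (X : 'M[C]_(m * m)) :
  X = \sum_(i < m) \sum_(j < m) \sum_(k < m) \sum_(l < m)
        X (pidx i k) (pidx j l) *: (E i j *t E k l).
Proof.
rewrite {1}(matrix_sum_delta X) sum_pidx; apply: eq_bigr => i _.
under eq_bigr => k _ do rewrite sum_pidx.
rewrite exchange_big; apply: eq_bigr => j _; apply: eq_bigr => k _; apply: eq_bigr => l _.
by rewrite /E tens_delta.
Qed.


Lemma lin_expand m q r (f : 'M[C]_m -> 'M[C]_(q, r)) (hf : lin f) (a : 'M[C]_m) :
  f a = \sum_(i < m) \sum_(j < m) a i j *: f (E i j).
Proof. by rewrite {1}(mat_decomp a) lin_sum //; apply: eq_bigr => i _; rewrite lin_sum //; apply: eq_bigr => j _; rewrite linZ. Qed.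

Lemma linf_expand m (f : 'M[C]_m -> C) (hf : linf f) (a : 'M[C]_m) :
  f a = \sum_(i < m) \sum_(j < m) a i j * f (E i j).
Proof. by rewrite {1}(mat_decomp a) linf_sum //; apply: eq_bigr => i _; rewrite linf_sum //; apply: eq_bigr => j _; rewrite linfZ. Qed.

Section Sum4.
Variables (V : lmodType C) (m : nat) (K : 'I_m -> 'I_m -> 'I_m -> 'I_m -> V).
Definition sum4 (X : 'M[C]_(m * m)) :=
  \sum_(i < m) \sum_(j < m) \sum_(k < m) \sum_(l < m) X (pidx i k) (pidx j l) *: K i j k l.
Lemma sum4_lin a X Y : sum4 (a *: X + Y) = a *: sum4 X + sum4 Y.
Proof.
rewrite /sum4 scaler_sumr -big_split; apply: eq_bigr => i _.
rewrite scaler_sumr -big_split; apply: eq_bigr => j _.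
rewrite scaler_sumr -big_split; apply: eq_bigr => k _.
rewrite scaler_sumr -big_split; apply: eq_bigr => l _.
by rewrite !mxE scalerDl scalerA.
Qed.
Lemma sum4_tens (a b : 'M[C]_m) :
  sum4 (a *t b) = \sum_(i < m) \sum_(j < m) a i j *: \sum_(k < m) \sum_(l < m) b k l *: K i j k l.
Proof.
apply: eq_bigr => i _; apply: eq_bigr => j _; rewrite scaler_sumr; apply: eq_bigr => k _.
by rewrite scaler_sumr; apply: eq_bigr => l _; rewrite tensE scalerA.
Qed.
End Sum4.

Section Maps.
Variable m : nat.

Lemma tmap_lin p q (f : 'M[C]_m -> 'M[C]_p) (g : 'M[C]_m -> 'M[C]_q) : lin (tmap f g).
Proof. move=> a X Y; exact: (sum4_lin (fun i j k l => f (E i j) *t g (E k l))). Qed.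

Lemma tmap_tens p q (f : 'M[C]_m -> 'M[C]_p) (g : 'M[C]_m -> 'M[C]_q) (hf : lin f) (hg : lin g) a b :
  tmap f g (a *t b) = f a *t g b.
Proof.
rewrite [LHS](sum4_tens (fun i j k l => f (E i j) *t g (E k l))).
rewrite (lin_expand hf a) tens_suml; apply: eq_bigr => i _.
rewrite tens_suml; apply: eq_bigr => j _.
by rewrite tensZl (lin_expand hg b) tens_sumr; congr (_ *: _); apply: eq_bigr => k _;
  rewrite tens_sumr; apply: eq_bigr => l _; rewrite tensZr.
Qed.

Lemma mu_lin : lin (@mu R m).
Proof. move=> a X Y; exact: (sum4_lin (fun i j k l => E i j *m E k l)). Qed.

Lemma mu_tens a b : mu (a *t b) = a *m b :> 'M[C]_m.
Proof.
rewrite [LHS](sum4_tens (fun i j k l => E i j *m E k l)).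
rewrite [in RHS](mat_decomp a) mulmx_suml; apply: eq_bigr => i _.
rewrite mulmx_suml; apply: eq_bigr => j _.
rewrite -scalemxAl [in RHS](mat_decomp b) mulmx_sumr; congr (_ *: _); apply: eq_bigr => k _.
by rewrite mulmx_sumr; apply: eq_bigr => l _; rewrite scalemxAr.
Qed.

Lemma flip_lin : lin (@flip R m).
Proof. move=> a X Y; exact: (sum4_lin (fun i j k l => E k l *t E i j)). Qed.

Lemma flip_tens a b : flip (a *t b) = b *t a :> 'M[C]_(m * m).
Proof.
rewrite [LHS](sum4_tens (fun i j k l => E k l *t E i j)).
rewrite [in RHS](mat_decomp a) tens_sumr; apply: eq_bigr => i _.
rewrite tens_sumr; apply: eq_bigr => j _.
rewrite tensZr [in RHS](mat_decomp b) tens_suml; congr (_ *: _); apply: eq_bigr => k _.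
by rewrite tens_suml; apply: eq_bigr => l _; rewrite tensZl.
Qed.

Lemma lslot_lin (phi : 'M[C]_m -> C) : lin (lslot phi).
Proof.
move=> a X Y; apply/matrixP=> k l; rewrite !mxE mulr_sumr -big_split; apply: eq_bigr => i _.
by rewrite mulr_sumr -big_split; apply: eq_bigr => j _; rewrite !mxE mulrDl mulrA.
Qed.

Lemma lslot_tens (phi : 'M[C]_m -> C) (hphi : linf phi) a b : lslot phi (a *t b) = phi a *: b.
Proof.
apply/matrixP=> k l; rewrite !mxE (linf_expand hphi a) mulr_suml; apply: eq_bigr => i _.
by rewrite mulr_suml; apply: eq_bigr => j _; rewrite tensE mulrAC.
Qed.

Lemma rslot_lin (phi : 'M[C]_m -> C) : lin (rslot phi).
Proof.
move=> a X Y; apply/matrixP=> i j; rewrite !mxE mulr_sumr -big_split; apply: eq_bigr => k _.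
by rewrite mulr_sumr -big_split; apply: eq_bigr => l _; rewrite !mxE mulrDl mulrA.
Qed.

Lemma rslot_tens (phi : 'M[C]_m -> C) (hphi : linf phi) a b : rslot phi (a *t b) = phi b *: a.
Proof.
apply/matrixP=> i j; rewrite !mxE (linf_expand hphi b) mulr_suml; apply: eq_bigr => k _.
by rewrite mulr_suml; apply: eq_bigr => l _; rewrite tensE [RHS]mulrC mulrA.
Qed.

Lemma tscal_lin (phi psi : 'M[C]_m -> C) : linf (tscal phi psi).
Proof.
move=> a X Y; rewrite /tscal mulr_sumr -big_split; apply: eq_bigr => i _.
rewrite mulr_sumr -big_split; apply: eq_bigr => j _.
rewrite mulr_sumr -big_split; apply: eq_bigr => k _.
rewrite mulr_sumr -big_split; apply: eq_bigr => l _.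
by rewrite !mxE !mulrDl !mulrA.
Qed.

Lemma tscal_tens (phi psi : 'M[C]_m -> C) (hphi : linf phi) (hpsi : linf psi) a b :
  tscal phi psi (a *t b) = phi a * psi b.
Proof.
rewrite /tscal (linf_expand hphi a) mulr_suml; apply: eq_bigr => i _.
rewrite mulr_suml; apply: eq_bigr => j _.
rewrite (linf_expand hpsi b) mulr_sumr; apply: eq_bigr => k _.
rewrite mulr_sumr; apply: eq_bigr => l _.
by rewrite tensE; rewrite -!mulrA; congr (_ * _); rewrite mulrCA.
Qed.

End Maps.


Lemma lin_comp m1 p1 m2 p2 m3 p3 (f : 'M[C]_(m2, p2) -> 'M[C]_(m3, p3)) (g : 'M[C]_(m1, p1) -> 'M[C]_(m2, p2)) :
  lin f -> lin g -> lin (fun x => f (g x)).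
Proof. by move=> hf hg a x y; rewrite hg hf. Qed.
Lemma linf_comp m1 p1 m2 p2 (f : 'M[C]_(m2, p2) -> C) (g : 'M[C]_(m1, p1) -> 'M[C]_(m2, p2)) :
  linf f -> lin g -> linf (fun x => f (g x)).
Proof. by move=> hf hg a x y; rewrite hg hf. Qed.
Lemma lin_mulr m p q (B : 'M[C]_(p, q)) : lin (fun X : 'M[C]_(m, p) => X *m B).
Proof. by move=> a x y; rewrite mulmxDl scalemxAl. Qed.
Lemma lin_mull m p q (B : 'M[C]_(m, p)) : lin (fun X : 'M[C]_(p, q) => B *m X).
Proof. by move=> a x y; rewrite mulmxDr scalemxAr. Qed.
Lemma lin_id m p : lin (fun X : 'M[C]_(m, p) => X).
Proof. by []. Qed.

Lemma tens_ext m p q (F G : 'M[C]_(m * m) -> 'M[C]_(p, q)) :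
  lin F -> lin G -> (forall x y, F (x *t y) = G (x *t y)) -> forall X, F X = G X.
Proof.
move=> hF hG h X; rewrite (tens_decomp X) (lin_sum hF) (lin_sum hG); apply: eq_bigr => i _.
rewrite (lin_sum hF) (lin_sum hG); apply: eq_bigr => j _.
rewrite (lin_sum hF) (lin_sum hG); apply: eq_bigr => k _.
rewrite (lin_sum hF) (lin_sum hG); apply: eq_bigr => l _.
by rewrite (linZ hF) (linZ hG) h.
Qed.

Section Slots.
Variables (m : nat) (phi : 'M[C]_m -> C).
Hypothesis hphi : linf phi.
Lemma lslot_mulr X q : lslot phi (X *m (1%:M *t q)) = lslot phi X *m q.
Proof.
apply: (tens_ext (F := fun X => lslot phi (X *m (1%:M *t q))) (G := fun X => lslot phi X *m q)) => //.
- exact: lin_comp (lslot_lin phi) (lin_mulr _).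
- exact: lin_comp (lin_mulr _) (lslot_lin phi).
by move=> x y; rewrite tens_mul mulmx1 !lslot_tens // scalemxAl.
Qed.
Lemma lslot_mull X q : lslot phi ((1%:M *t q) *m X) = q *m lslot phi X.
Proof.
apply: (tens_ext (F := fun X => lslot phi ((1%:M *t q) *m X)) (G := fun X => q *m lslot phi X)) => //.
- exact: lin_comp (lslot_lin phi) (lin_mull _).
- exact: lin_comp (lin_mull _) (lslot_lin phi).
by move=> x y; rewrite tens_mul mul1mx !lslot_tens // scalemxAr.
Qed.
Lemma rslot_mulr X q : rslot phi (X *m (q *t 1%:M)) = rslot phi X *m q.
Proof.
apply: (tens_ext (F := fun X => rslot phi (X *m (q *t 1%:M))) (G := fun X => rslot phi X *m q)) => //.
- exact: lin_comp (rslot_lin phi) (lin_mulr _).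
- exact: lin_comp (lin_mulr _) (rslot_lin phi).
by move=> x y; rewrite tens_mul mulmx1 !rslot_tens // scalemxAl.
Qed.
Lemma rslot_mull X q : rslot phi ((q *t 1%:M) *m X) = q *m rslot phi X.
Proof.
apply: (tens_ext (F := fun X => rslot phi ((q *t 1%:M) *m X)) (G := fun X => q *m rslot phi X)) => //.
- exact: lin_comp (rslot_lin phi) (lin_mull _).
- exact: lin_comp (lin_mull _) (rslot_lin phi).
by move=> x y; rewrite tens_mul mul1mx !rslot_tens // scalemxAr.
Qed.
End Slots.

Lemma flipK m (X : 'M[C]_(m * m)) : flip (flip X) = X.
Proof.
apply: (tens_ext (F := fun X => flip (flip X)) (G := id)) => //.
- exact: lin_comp (@flip_lin m) (@flip_lin m).
by move=> x y; rewrite !flip_tens.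
Qed.


Lemma rslot_tmap m (f : 'M[C]_m -> 'M[C]_m) (phi : 'M[C]_m -> C) : lin f -> linf phi ->
  forall X, rslot phi (tmap f id X) = f (rslot phi X).
Proof.
move=> hf hphi; apply: (tens_ext (F := fun X => rslot phi (tmap f id X)) (G := fun X => f (rslot phi X))).
- exact: lin_comp (rslot_lin phi) (tmap_lin _ _).
- exact: lin_comp hf (rslot_lin phi).
by move=> x y; rewrite tmap_tens // !rslot_tens // (linZ hf).
Qed.
Lemma lslot_tmap m (f : 'M[C]_m -> 'M[C]_m) (phi : 'M[C]_m -> C) : lin f -> linf phi ->
  forall X, lslot phi (tmap id f X) = f (lslot phi X).
Proof.
move=> hf hphi; apply: (tens_ext (F := fun X => lslot phi (tmap id f X)) (G := fun X => f (lslot phi X))).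
- exact: lin_comp (lslot_lin phi) (tmap_lin _ _).
- exact: lin_comp hf (lslot_lin phi).
by move=> x y; rewrite tmap_tens // !lslot_tens // (linZ hf).
Qed.
End Infra.



Section Alg.
Variable R : realType.
Local Notation C := (R[i]).
Local Notation E := (@E R _).
Local Notation Eb := (@Eb R _).
Variables (n : nat) (M : 'M[C]_n -> Prop) (D : 'M[C]_n -> 'M[C]_(n * n))
  (S : 'M[C]_n -> 'M[C]_n) (eps : 'M[C]_n -> C).
Hypothesis HW : weak_Kac M D S eps.
Variables (k : nat) (a b : 'I_k -> 'M[C]_n).
Hypothesis Hab : forall t, M (a t) /\ M (b t).
Hypothesis He : D 1%:M = \sum_(t < k) (a t *t b t).

Local Notation e := (D 1%:M).
Local Notation et := (eps_t S D).
Local Notation es := (eps_s S D).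

Lemma M1 : M 1%:M. Proof. by case: (wk_alg HW). Qed.
Lemma Mlin c x y : M x -> M y -> M (c *: x + y). Proof. by case: (wk_alg HW) => _ h _ _; apply: h. Qed.
Lemma MM x y : M x -> M y -> M (x *m y). Proof. by case: (wk_alg HW) => _ _ h _; apply: h. Qed.
Lemma Madj x : M x -> M (adj x). Proof. by case: (wk_alg HW) => _ _ _ h; apply: h. Qed.
Lemma M0 : M 0.
Proof. by have := Mlin (-1) M1 M1; rewrite scaleN1r addNr. Qed.
Lemma MZ c x : M x -> M (c *: x). Proof. by move=> hx; rewrite -[_ *: _]addr0; apply: Mlin => //; apply: M0. Qed.
Lemma MD x y : M x -> M y -> M (x + y). Proof. by move=> hx hy; rewrite -[x]scale1r; apply: Mlin. Qed.
Lemma Msum I (s : seq I) (P : pred I) (F : I -> 'M_n) :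
  (forall i, M (F i)) -> M (\sum_(i <- s | P i) F i).
Proof. by move=> h; elim/big_rec: _ => [|i x _ hx]; [apply: M0 | apply: MD]. Qed.
Lemma Ma t : M (a t). Proof. by case: (Hab t). Qed.
Lemma Mb t : M (b t). Proof. by case: (Hab t). Qed.
Lemma MS x : M x -> M (S x). Proof. move=> hx; exact: (wk_SM HW hx). Qed.

Lemma Dlin : lin D. Proof. exact (wk_Dlin HW). Qed.
Lemma Slin : lin S. Proof. exact (wk_Slin HW). Qed.
Lemma elin : linf eps. Proof. exact (wk_elin HW). Qed.

Lemma lin_idd m p : lin (@id 'M[C]_(m, p)). Proof. by []. Qed.
Create HintDb mdb.
#[local] Hint Resolve M1 MM Madj MS Ma Mb MZ MD M0 Dlin Slin elin lin_idd : mdb.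
Ltac mt := auto 12 with mdb.
Lemma et_lin : lin et.
Proof. exact: lin_comp (@mu_lin R n) (lin_comp (tmap_lin _ _) Dlin). Qed.
Lemma es_lin : lin es.
Proof. exact: lin_comp (@mu_lin R n) (lin_comp (tmap_lin _ _) Dlin). Qed.

#[local] Hint Resolve et_lin es_lin : mdb.

Lemma DM x : M x -> in_tens M (D x). Proof. move=> hx; exact: (wk_DM HW hx). Qed.
Lemma SS x : M x -> S (S x) = x. Proof. move=> hx; exact: (wk_SS HW hx). Qed.
Lemma Smul x y : M x -> M y -> S (x *m y) = S y *m S x. Proof. move=> hx hy; exact: (wk_Smul HW hx hy). Qed.
Lemma eS x : M x -> eps (S x) = eps x. Proof. move=> hx; exact: (wk_eS HW hx). Qed.
Lemma Dmul x y : M x -> M y -> D (x *m y) = D x *m D y. Proof. move=> hx hy; exact: (wk_Dmul HW hx hy). Qed.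

Lemma e_idem : e *m e = e.
Proof. by rewrite -Dmul ?mulmx1 //; apply: M1. Qed.
Lemma e_adj : adj e = e.
Proof. by have := wk_Dadj HW M1; rewrite cadj1 => h; rewrite -h. Qed.
Lemma e_flipS : flip (tmap S S e) = e.
Proof. by rewrite (wk_SD HW M1) (wk_S1 HW) flipK. Qed.

Lemma sum_flipS : \sum_(t < k) (S (b t) *t S (a t)) = e.
Proof.
rewrite -[RHS]e_flipS He (lin_sum (tmap_lin _ _)) (lin_sum (@flip_lin R n)).
by apply: eq_bigr => t _; rewrite tmap_tens ?flip_tens; mt.
Qed.
Lemma sum_adj : \sum_(t < k) (adj (a t) *t adj (b t)) = e.
Proof. by rewrite -[RHS]e_adj He cadj_sum; apply: eq_bigr => t _; rewrite cadj_tens. Qed.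

Lemma e_mulr (z : 'M[C]_n) : e *m (z *t 1%:M) = \sum_(t < k) ((a t *m z) *t b t).
Proof. by rewrite He mulmx_suml; apply: eq_bigr => t _; rewrite tens_mul mulmx1. Qed.
Lemma e_mull (z : 'M[C]_n) : (z *t 1%:M) *m e = \sum_(t < k) ((z *m a t) *t b t).
Proof. by rewrite He mulmx_sumr; apply: eq_bigr => t _; rewrite tens_mul mul1mx. Qed.
Lemma e_mulr2 (z : 'M[C]_n) : e *m (1%:M *t z) = \sum_(t < k) (a t *t (b t *m z)).
Proof. by rewrite He mulmx_suml; apply: eq_bigr => t _; rewrite tens_mul mulmx1. Qed.
Lemma e_mull2 (z : 'M[C]_n) : (1%:M *t z) *m e = \sum_(t < k) (a t *t (z *m b t)).
Proof. by rewrite He mulmx_sumr; apply: eq_bigr => t _; rewrite tens_mul mul1mx. Qed.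


Lemma eDl x : M x -> lslot eps (D x) = x. Proof. move=> hx; exact: (wk_eDl HW hx). Qed.
Lemma eDr x : M x -> rslot eps (D x) = x. Proof. move=> hx; exact: (wk_eDr HW hx). Qed.

Lemma Ts' w : M w -> es w = rslot eps ((1%:M *t w) *m e).
Proof.
move=> hw; have := congr1 (rslot eps) (wk_es HW hw).
by rewrite (rslot_tmap es_lin elin) (eDr hw).
Qed.

Lemma Ts w : M w -> es w = \sum_(t < k) eps (w *m b t) *: a t.
Proof.
move=> hw; rewrite Ts' // e_mull2 (lin_sum (rslot_lin _)); apply: eq_bigr => t _.
by rewrite (rslot_tens elin).
Qed.

Lemma et_S w : M w -> et w = S (es (S w)).
Proof.
move=> hw; have [k' [c [d [hcd hD]]]] := DM hw.
have hDS : D (S w) = flip (tmap S S (D w)) by rewrite (wk_SD HW hw) flipK.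
rewrite /eps_s /eps_t hDS hD (lin_sum (tmap_lin S S)) (lin_sum (@flip_lin R n)) (lin_sum (tmap_lin S id)) (lin_sum (tmap_lin id S)).
rewrite !(lin_sum (@mu_lin R n)) (lin_sum Slin); apply: eq_bigr => s _.
have [hc hd] := hcd s.
rewrite !(tmap_tens Slin Slin) flip_tens (tmap_tens Slin (@lin_idd _ _)) (tmap_tens (@lin_idd _ _) Slin) !mu_tens.
rewrite Smul; try by mt.
by rewrite !SS; mt.
Qed.

Lemma T w : M w -> et w = lslot eps (e *m (w *t 1%:M)).
Proof.
move=> hw; rewrite et_S // Ts; last by mt.
rewrite (lin_sum Slin) -{1}sum_flipS mulmx_suml (lin_sum (lslot_lin _)).
apply: eq_bigr => t _; rewrite (linZ Slin) tens_mul mulmx1 (lslot_tens elin).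
congr (_ *: _); rewrite -[in RHS]eS; last by mt.
by rewrite Smul ?SS; mt.
Qed.

Lemma Tsum w : M w -> et w = \sum_(t < k) eps (a t *m w) *: b t.
Proof.
move=> hw; rewrite T // e_mulr (lin_sum (lslot_lin _)); apply: eq_bigr => t _.
by rewrite (lslot_tens elin).
Qed.

Lemma sandw1 k' (c d : 'I_k' -> 'M[C]_n) (x y : 'M[C]_n) :
  (x *t 1%:M) *m (\sum_(t < k') (c t *t d t)) *m (1%:M *t y) = \sum_(t < k') ((x *m c t) *t (d t *m y)).
Proof. by rewrite mulmx_sumr mulmx_suml; apply: eq_bigr => t _; rewrite !tens_mul mul1mx mulmx1. Qed.
Lemma sandw2 k' (c d : 'I_k' -> 'M[C]_n) (x y : 'M[C]_n) :
  (1%:M *t y) *m (\sum_(t < k') (c t *t d t)) *m (x *t 1%:M) = \sum_(t < k') ((c t *m x) *t (y *m d t)).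
Proof. by rewrite mulmx_sumr mulmx_suml; apply: eq_bigr => t _; rewrite !tens_mul mul1mx mulmx1. Qed.
Lemma tscal_sum k' (c d : 'I_k' -> 'M[C]_n) :
  tscal eps eps (\sum_(t < k') (c t *t d t)) = \sum_(t < k') eps (c t) * eps (d t).
Proof. rewrite (linf_sum (tscal_lin _ _)); apply: eq_bigr => t _; exact: (tscal_tens elin elin). Qed.

Lemma eadj x : M x -> eps (adj x) = conjc (eps x). Proof. move=> hx; exact: (wk_eadj HW hx). Qed.
Lemma eadj' x : M x -> eps x = conjc (eps (adj x)). Proof. by move=> hx; rewrite eadj // conjcK. Qed.

Lemma ee_sum x y : M x -> M y -> \sum_(t < k) eps (x *m a t) * eps (b t *m y) = eps (x *m y).
Proof. by move=> hx hy; rewrite -(wk_ee HW hx hy) He sandw1 tscal_sum. Qed.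

Lemma Core p q : M p -> M q -> \sum_(t < k) eps (a t *m p) * eps (q *m b t) = eps (q *m p).
Proof.
move=> hp hq.
have -> : \sum_(t < k) eps (a t *m p) * eps (q *m b t) = tscal eps eps ((1%:M *t q) *m e *m (p *t 1%:M)).
  by rewrite He sandw2 tscal_sum.
rewrite -sum_adj sandw2 tscal_sum.
transitivity (conjc (\sum_(t < k) eps (adj p *m a t) * eps (b t *m adj q))); last first.
  rewrite ee_sum; try by mt.
  by rewrite eadj' ?conjcK ?cadjM ?cadjK; mt.
rewrite rmorph_sum; apply: eq_bigr => t _; rewrite rmorphM.
rewrite (eadj' (x := adj (a t) *m p)); last by mt.
rewrite (eadj' (x := q *m adj (b t))); last by mt.
by rewrite !cadjM !cadjK.
Qed.

Lemma F2 x y : M x -> M y -> eps (y *m et x) = eps (y *m x).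
Proof.
move=> hx hy; rewrite Tsum // mulmx_sumr (linf_sum elin) -Core //; apply: eq_bigr => t _.
by rewrite -scalemxAr (linfZ elin).
Qed.

Lemma F2' x y : M x -> M y -> eps (es x *m y) = eps (x *m y).
Proof.
move=> hx hy; rewrite Ts // mulmx_suml (linf_sum elin) -Core //; apply: eq_bigr => t _.
by rewrite -scalemxAl (linfZ elin) mulrC.
Qed.

Lemma Met w : M w -> M (et w).
Proof. by move=> hw; rewrite Tsum //; apply: Msum => t; apply: MZ; apply: Mb. Qed.
Lemma Mes w : M w -> M (es w).
Proof. by move=> hw; rewrite Ts //; apply: Msum => t; apply: MZ; apply: Ma. Qed.
#[local] Hint Resolve Met Mes : mdb.

Lemma etet c w : M c -> M w -> et (c *m et w) = et (c *m w).
Proof.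
move=> hc hw; rewrite [et (c *m et w)]Tsum ?[et (c *m w)]Tsum; try by mt.
by apply: eq_bigr => t _; rewrite !mulmxA F2; mt.
Qed.

Lemma G1 (I : finType) (p q : I -> 'M[C]_n) : (forall i, M (p i)) ->
  \sum_(i : I) et (p i) *m q i = lslot eps (e *m \sum_(i : I) (p i *t q i)).
Proof.
move=> hp; rewrite mulmx_sumr (lin_sum (lslot_lin _)); apply: eq_bigr => i _.
by rewrite T // -(lslot_mulr elin) -mulmxA tens_mul mulmx1 mul1mx.
Qed.

Section NtFacts.
Variable z : 'M[C]_n.
Hypothesis hz : Nt M D z.
Lemma NtM : M z. Proof. by case: hz. Qed.
Lemma NtD1 : D z = e *m (z *t 1%:M). Proof. by case: hz. Qed.
Lemma NtD2 : D z = (z *t 1%:M) *m e. Proof. by case: hz. Qed.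
End NtFacts.
#[local] Hint Resolve NtM : mdb.

Lemma Nt1 : Nt M D 1%:M.
Proof. by split; rewrite ?tens11 ?mulmx1 ?mul1mx //; apply: M1. Qed.

Lemma Dadj x : M x -> D (adj x) = adj (D x). Proof. move=> hx; exact: (wk_Dadj HW hx). Qed.

Lemma Nt_adj z : Nt M D z -> Nt M D (adj z).
Proof.
move=> hz; split; first by mt.
- by rewrite Dadj ?(NtD2 hz) ?cadjM ?e_adj ?cadj_tens ?cadj1; mt.
- by rewrite Dadj ?(NtD1 hz) ?cadjM ?e_adj ?cadj_tens ?cadj1; mt.
Qed.

Lemma A1 z : Nt M D z -> \sum_(t < k) et (a t *m z) *m b t = z.
Proof.
move=> hz; rewrite (@G1 _ (fun t => a t *m z) b) => [|t]; last by mt.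
by rewrite -e_mulr mulmxA e_idem -(NtD1 hz) eDl; mt.
Qed.

Lemma A2 x z k' (c d : 'I_k' -> 'M[C]_n) : M x -> Nt M D z -> (forall s, M (c s) /\ M (d s)) ->
  D x = \sum_(s < k') (c s *t d s) ->
  \sum_(s < k') \sum_(t < k) et (c s *m et (a t *m z)) *m (d s *m b t) = x *m z.
Proof.
move=> hx hz hcd hD.
have -> : \sum_(s < k') \sum_(t < k) et (c s *m et (a t *m z)) *m (d s *m b t) =
          \sum_(st : 'I_k' * 'I_k) et (c st.1 *m (a st.2 *m z)) *m (d st.1 *m b st.2).
  rewrite pair_big /=; apply: eq_bigr => -[s t] _ /=.
  have [hc _] := hcd s; by rewrite etet; mt.
rewrite G1 => [|[s t]]; last by have [hc _] := hcd s; mt.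
have -> : \sum_(st : 'I_k' * 'I_k) ((c st.1 *m (a st.2 *m z)) *t (d st.1 *m b st.2)) =
          D x *m (e *m (z *t 1%:M)).
  rewrite e_mulr hD mulmx_suml; under [RHS]eq_bigr => s _ do rewrite mulmx_sumr.
  by rewrite pair_bigA /=; apply: eq_bigr => -[s t] _ /=; rewrite tens_mul.
by rewrite -(NtD1 hz) mulmxA -Dmul ?mul1mx -?Dmul ?eDl; mt.
Qed.

Lemma etip p q : M p -> M q -> eps (adj (et p) *m et q) = eps (adj p *m q).
Proof.
move=> hp hq; rewrite F2; try by mt.
rewrite eadj' ?cadjM ?cadjK ?F2; try by mt.
by rewrite -eadj ?cadjM ?cadjK; mt.
Qed.

Lemma A3 z z' : Nt M D z -> Nt M D z' ->
  \sum_(s < k) \sum_(t < k) eps (adj (et (a s *m z')) *m et (a t *m z)) *: (adj (b s) *m b t)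
  = adj z' *m z.
Proof.
move=> hz hz'.
have -> : \sum_(s < k) \sum_(t < k) eps (adj (et (a s *m z')) *m et (a t *m z)) *: (adj (b s) *m b t)
  = lslot eps (adj (D z') *m D z).
  rewrite (NtD1 hz) (NtD1 hz') !e_mulr cadj_sum mulmx_suml (lin_sum (lslot_lin _)).
  apply: eq_bigr => s _; rewrite mulmx_sumr (lin_sum (lslot_lin _)); apply: eq_bigr => t _.
  by rewrite etip ?cadj_tens ?tens_mul ?(lslot_tens elin); mt.
by rewrite -Dadj -?Dmul ?eDl; mt.
Qed.

Lemma Ldef y : M y -> \sum_(t < k) eps (y *m a t) *: b t = adj (et (adj y)).
Proof.
move=> hy; rewrite Tsum; last by mt.
rewrite cadj_sum.
have -> : \sum_(t < k) adj (eps (a t *m adj y) *: b t) = lslot eps ((y *t 1%:M) *m \sum_(t < k) (adj (a t) *t adj (b t))).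
  rewrite mulmx_sumr (lin_sum (lslot_lin _)); apply: eq_bigr => t _.
  rewrite tens_mul mul1mx (lslot_tens elin) cadjZ; congr (_ *: _).
  by rewrite [RHS]eadj' ?cadjM ?cadjK; mt.
rewrite sum_adj e_mull (lin_sum (lslot_lin _)); apply: eq_bigr => t _.
by rewrite (lslot_tens elin).
Qed.

Lemma leftlin z w : Nt M D z -> M w -> et (z *m w) = z *m et w.
Proof.
move=> hz hw; rewrite !T; try by mt.
rewrite -(lslot_mull elin) mulmxA.
have -> : (1%:M *t z) *m e = tmap es id (D z) by rewrite (wk_es HW (NtM hz)).
have -> : e *m ((z *m w) *t 1%:M) = D z *m (w *t 1%:M).
  by rewrite (NtD1 hz) -mulmxA tens_mul mulmx1.
have [k' [c [d [hcd hD]]]] := DM (NtM hz).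
rewrite hD (lin_sum (tmap_lin _ _)) !mulmx_suml !(lin_sum (lslot_lin _)); apply: eq_bigr => s _.
have [hc hd] := hcd s.
rewrite (tmap_tens es_lin (@lin_idd _ _)) !tens_mul !mulmx1 !(lslot_tens elin).
by rewrite F2'.
Qed.

Lemma A4 y z : M y -> Nt M D z ->
  (\sum_(t < k) eps (y *m a t) *: b t) *m z = \sum_(t < k) eps (y *m (a t *m z)) *: b t.
Proof.
move=> hy hz; have hz' := Nt_adj hz.
rewrite Ldef // -[z]cadjK -cadjM -leftlin ?cadjK; try by mt.
rewrite -cadjM -Ldef; last by mt.
have h1 : forall w, \sum_(t < k) eps (w *m a t) *: b t = lslot eps ((w *t 1%:M) *m e).
  move=> w; rewrite e_mull (lin_sum (lslot_lin _)); apply: eq_bigr => t _.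
  by rewrite (lslot_tens elin).
rewrite h1.
have -> : (y *m z) *t (1%:M : 'M[C]_n) = (y *t 1%:M) *m (z *t 1%:M) by rewrite tens_mul mulmx1.
rewrite -mulmxA -(NtD2 hz) (NtD1 hz).
rewrite e_mulr mulmx_sumr (lin_sum (lslot_lin _)); apply: eq_bigr => t _.
by rewrite tens_mul mul1mx (lslot_tens elin) mulmxA.
Qed.

Lemma et1 : et 1%:M = 1%:M.
Proof. by rewrite T ?tens11 ?mulmx1 ?eDl; mt. Qed.
Lemma sum_aSb : \sum_(t < k) a t *m S (b t) = 1%:M.
Proof.
rewrite -et1 /eps_t He (lin_sum (tmap_lin id S)) (lin_sum (@mu_lin R n)); apply: eq_bigr => t _.
by rewrite (tmap_tens (@lin_idd _ _) Slin) mu_tens.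
Qed.
Lemma es1 : es 1%:M = 1%:M.
Proof. by rewrite Ts' ?tens11 ?mul1mx ?eDr; mt. Qed.
Lemma sum_Sab : \sum_(t < k) S (a t) *m b t = 1%:M.
Proof.
rewrite -es1 /eps_s He (lin_sum (tmap_lin S id)) (lin_sum (@mu_lin R n)); apply: eq_bigr => t _.
by rewrite (tmap_tens Slin (@lin_idd _ _)) mu_tens.
Qed.

Lemma es_Nt z : Nt M D z -> es z = S z.
Proof.
move=> hz; rewrite /eps_s (NtD1 hz) e_mulr (lin_sum (tmap_lin S id)) (lin_sum (@mu_lin R n)).
transitivity (S z *m \sum_(t < k) S (a t) *m b t); last by rewrite sum_Sab mulmx1.
rewrite mulmx_sumr; apply: eq_bigr => t _.
by rewrite (tmap_tens Slin (@lin_idd _ _)) mu_tens Smul ?mulmxA; mt.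
Qed.

Lemma Ses w : M w -> S (es w) = et (S w).
Proof. by move=> hw; rewrite et_S ?SS; mt. Qed.

Lemma Sinj u v : M u -> M v -> S u = S v -> u = v.
Proof. by move=> hu hv h; rewrite -(SS hu) h SS. Qed.

Lemma DS z : Nt M D z -> D (S z) = flip (tmap S S (D z)).
Proof. by move=> hz; rewrite (wk_SD HW (NtM hz)) flipK. Qed.

Lemma DSz1 z : Nt M D z -> D (S z) = (1%:M *t S z) *m e.
Proof.
move=> hz; rewrite DS // (NtD1 hz) e_mulr (lin_sum (tmap_lin S S)) (lin_sum (@flip_lin R n)).
rewrite -sum_flipS mulmx_sumr; apply: eq_bigr => t _.
by rewrite (tmap_tens Slin Slin) flip_tens tens_mul mul1mx Smul; mt.
Qed.

Lemma DSz2 z : Nt M D z -> D (S z) = e *m (1%:M *t S z).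
Proof.
move=> hz; rewrite DS // (NtD2 hz) e_mull (lin_sum (tmap_lin S S)) (lin_sum (@flip_lin R n)).
rewrite -sum_flipS mulmx_suml; apply: eq_bigr => t _.
by rewrite (tmap_tens Slin Slin) flip_tens tens_mul mulmx1 Smul; mt.
Qed.

Lemma etSz z : Nt M D z -> et (S z) = z.
Proof.
move=> hz; rewrite /eps_t (DSz1 hz) e_mull2 (lin_sum (tmap_lin id S)) (lin_sum (@mu_lin R n)).
transitivity ((\sum_(t < k) a t *m S (b t)) *m z); last by rewrite sum_aSb mul1mx.
rewrite mulmx_suml; apply: eq_bigr => t _.
rewrite (tmap_tens (@lin_idd _ _) Slin) mu_tens Smul ?SS ?mulmxA //; mt.
Qed.

Lemma Qp q z : M q -> Nt M D z -> eps (q *m z) = eps (q *m S z).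
Proof. by move=> hq hz; rewrite -{1}(etSz hz) F2; mt. Qed.

Lemma etQ d z : M d -> Nt M D z -> et (d *m z) = et (d *m S z).
Proof.
move=> hd hz; rewrite !Tsum; try by mt.
by apply: eq_bigr => t _; rewrite !mulmxA Qp; mt.
Qed.

Definition Phi (X : 'M[C]_(n * n)) := mu (flip (tmap id (fun q => S (et q)) X)).
Lemma lin_Set : lin (fun q => S (et q)). Proof. exact: lin_comp Slin et_lin. Qed.
Lemma Phi_lin : lin Phi.
Proof. exact: lin_comp (@mu_lin R n) (lin_comp (@flip_lin R n) (tmap_lin _ _)). Qed.
Lemma Phi_tens p q : Phi (p *t q) = S (et q) *m p.
Proof. by rewrite /Phi (tmap_tens (@lin_idd _ _) lin_Set) flip_tens mu_tens. Qed.

Lemma PhiD y : M y -> Phi (D y) = y.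
Proof.
move=> hy; have h := wk_es HW (MS hy).
have [k' [c [d [hcd hD]]]] := DM hy.
have hDS : D (S y) = flip (tmap S S (D y)) by rewrite (wk_SD HW hy) flipK.
have := congr1 (fun X => mu (tmap id S X)) h.
rewrite /= e_mull2 hDS hD (lin_sum (tmap_lin S S)) (lin_sum (@flip_lin R n)) (lin_sum (tmap_lin _ id)).
rewrite !(lin_sum (tmap_lin id S)) !(lin_sum (@mu_lin R n)).
have -> : \sum_(t < k) mu (tmap id S (a t *t (S y *m b t))) = y.
  transitivity ((\sum_(t < k) a t *m S (b t)) *m y); last by rewrite sum_aSb mul1mx.
  rewrite mulmx_suml; apply: eq_bigr => t _.
  by rewrite (tmap_tens (@lin_idd _ _) Slin) mu_tens Smul ?SS ?mulmxA; mt.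
move=> <-; rewrite (lin_sum Phi_lin); apply: eq_bigr => s _.
have [hc hd] := hcd s.
rewrite Phi_tens (tmap_tens Slin Slin) flip_tens (tmap_tens es_lin (@lin_idd _ _)).
rewrite (tmap_tens (@lin_idd _ _) Slin) mu_tens SS //.
by rewrite -[es (S (d s))]SS ?Ses ?SS; mt.
Qed.

Lemma R_ x z : M x -> Nt M D z -> Phi (D x *m (1%:M *t z)) = x *m S z.
Proof.
move=> hx hz.
have -> : Phi (D x *m (1%:M *t z)) = Phi (D x *m (1%:M *t S z)).
  have [k' [c [d [hcd hD]]]] := DM hx.
  rewrite hD !mulmx_suml !(lin_sum Phi_lin); apply: eq_bigr => s _.
  have [hc hd] := hcd s.
  by rewrite !tens_mul !mulmx1 !Phi_tens etQ.
have -> : D x *m (1%:M *t S z) = D (x *m S z).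
  rewrite [RHS]Dmul; try by mt.
  by rewrite (DSz2 hz) mulmxA -Dmul ?mulmx1; mt.
by rewrite PhiD; mt.
Qed.

Lemma RS y z : M y -> Nt M D z -> rslot eps ((1%:M *t y) *m e *m (1%:M *t z)) = es y *m S z.
Proof.
move=> hy hz.
have -> : rslot eps ((1%:M *t y) *m e *m (1%:M *t z)) = rslot eps ((1%:M *t y) *m e *m (1%:M *t S z)).
  rewrite He !mulmx_sumr !mulmx_suml !(lin_sum (rslot_lin _)); apply: eq_bigr => t _.
  by rewrite !tens_mul !mul1mx !mulmx1 !(rslot_tens elin) Qp; mt.
rewrite -mulmxA -(DSz2 hz) (DSz1 hz) mulmxA tens_mul mul1mx -Ts'; last by mt.
apply: Sinj; try by mt.
rewrite Ses ?Smul ?SS ?leftlin ?Ses; mt.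
Qed.

Lemma A1' z : Nt M D z -> \sum_(t < k) S (et (b t *m z)) *m a t = S z.
Proof.
move=> hz; rewrite -[S z]mul1mx -R_; try by mt.
rewrite e_mulr2 (lin_sum Phi_lin); apply: eq_bigr => t _; by rewrite Phi_tens.
Qed.

Lemma A2' x z k' (c d : 'I_k' -> 'M[C]_n) : M x -> Nt M D z -> (forall s, M (c s) /\ M (d s)) ->
  D x = \sum_(s < k') (c s *t d s) ->
  \sum_(s < k') \sum_(t < k) S (et (d s *m et (b t *m z))) *m (c s *m a t) = x *m S z.
Proof.
move=> hx hz hcd hD.
have hDx : D x *m e = D x by rewrite -Dmul ?mulmx1; mt.
rewrite -R_ // -hDx -mulmxA e_mulr2 hD mulmx_suml (lin_sum Phi_lin); apply: eq_bigr => s _.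
have [hc hd] := hcd s.
rewrite mulmx_sumr (lin_sum Phi_lin); apply: eq_bigr => t _.
by rewrite tens_mul Phi_tens etet; mt.
Qed.

Lemma A3' z z' : Nt M D z -> Nt M D z' ->
  \sum_(s < k) \sum_(t < k) eps (adj (et (b s *m z')) *m et (b t *m z)) *: (adj (a s) *m a t)
  = adj (S z') *m S z.
Proof.
move=> hz hz'; have hy := Nt_adj hz'.
have -> : \sum_(s < k) \sum_(t < k) eps (adj (et (b s *m z')) *m et (b t *m z)) *: (adj (a s) *m a t)
  = rslot eps (adj (e *m (1%:M *t z')) *m (e *m (1%:M *t z))).
  rewrite !e_mulr2 cadj_sum mulmx_suml (lin_sum (rslot_lin _)).
  apply: eq_bigr => s _; rewrite mulmx_sumr (lin_sum (rslot_lin _)); apply: eq_bigr => t _.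
  by rewrite etip ?cadj_tens ?tens_mul ?(rslot_tens elin); mt.
rewrite cadjM e_adj cadj_tens cadj1 mulmxA -[_ *m e *m e]mulmxA e_idem RS; try by mt.
by rewrite es_Nt // (wk_Sadj HW (NtM hz')).
Qed.

Lemma A4' y z : M y -> Nt M D z ->
  \sum_(t < k) eps (y *m (b t *m z)) *: a t = (\sum_(t < k) eps (y *m b t) *: a t) *m S z.
Proof.
move=> hy hz; rewrite -Ts // -RS // He !mulmx_sumr !mulmx_suml (lin_sum (rslot_lin _)).
by apply: eq_bigr => t _; rewrite !tens_mul !mul1mx !mulmx1 (rslot_tens elin) mulmxA.
Qed.

Lemma cvec_lin : forall c (x y : 'M[C]_n), cvec (c *: x + y) = c *: cvec x + cvec y.
Proof. by move=> c x y; rewrite /cvec linearD linearZ /= linearD linearZ. Qed.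
Lemma cvec_sum I (s : seq I) (P : pred I) (F : I -> 'M[C]_n) :
  cvec (\sum_(i <- s | P i) F i) = \sum_(i <- s | P i) cvec (F i).
Proof. exact: (lin_sum cvec_lin). Qed.
Lemma cvecZ c (x : 'M[C]_n) : cvec (c *: x) = c *: cvec x.
Proof. exact: (linZ cvec_lin). Qed.

Lemma Eb_decomp (x : 'M[C]_n) : x = \sum_(b0 < n * n) (cvec x) b0 0 *: Eb b0.
Proof.
rewrite -{1}(mxvecK x) {1}(matrix_sum_delta (mxvec x)) big_ord1 linear_sum.
by apply: eq_bigr => b0 _; rewrite linearZ /cvec mxE.
Qed.

Definition pi_def (x : 'M[C]_n) : 'M[C]_(n * n) := \matrix_(a0, b0) (cvec (et (x *m Eb b0))) a0 0.
Fact pi_key : unit. Proof. by []. Qed.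
Definition pi := locked_with pi_key pi_def.
Lemma pi_unlock : pi = pi_def. Proof. exact: unlock. Qed.
Definition G : 'M[C]_(n * n) := \matrix_(a0, b0) eps (adj (Eb a0) *m Eb b0).
Lemma pi_eq : ract (counital_rep M D S eps) = pi. Proof. by rewrite pi_unlock. Qed.
Lemma G_eq : rgram (counital_rep M D S eps) = G. Proof. by []. Qed.

Lemma pi_entry x i j : pi x i j = cvec (et (x *m Eb j)) i 0.
Proof. by rewrite pi_unlock mxE. Qed.

Lemma pi_cvec x y : pi x *m cvec y = cvec (et (x *m y)).
Proof.
rewrite {2}(Eb_decomp y) mulmx_sumr (lin_sum et_lin) cvec_sum.
apply/matrixP=> i j; rewrite [j]ord1 summxE mxE; apply: eq_bigr => b0 _.
rewrite -scalemxAr (linZ et_lin) cvecZ [RHS]mxE mulrC.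
by rewrite pi_entry.
Qed.


Lemma pi_lin : lin pi.
Proof.
move=> c x y; apply/matrixP=> i j.
rewrite [RHS]mxE [(c *: pi x) i j]mxE 3!pi_entry mulmxDl -scalemxAl et_lin cvec_lin.
by rewrite [X in X = _]mxE [X in X + _ = _]mxE.
Qed.

Lemma G_entry i j : G i j = eps (adj (Eb i) *m Eb j). Proof. by rewrite mxE. Qed.

Lemma G_form p q : (adj (cvec p) *m G *m cvec q) 0 0 = eps (adj p *m q).
Proof.
rewrite [in RHS](Eb_decomp p) [in RHS](Eb_decomp q) cadj_sum mulmx_suml (linf_sum elin) mxE.
under eq_bigr => j _ do rewrite mxE mulr_suml.
rewrite exchange_big; apply: eq_bigr => a0 _.
rewrite mulmx_sumr (linf_sum elin); apply: eq_bigr => b0 _.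
rewrite cadjZ -scalemxAl -scalemxAr (linfZ elin) (linfZ elin) G_entry cadjE.
by rewrite mulrA mulrAC.
Qed.

Section Rep.
Variables (d : nat) (rho : 'M[C]_n -> 'M[C]_d).
Hypothesis Hrho : unital_star_rep M rho.
Lemma rho_lin : lin rho. Proof. by case: Hrho. Qed.
Lemma rho1 : rho 1%:M = 1%:M. Proof. by case: Hrho. Qed.
Lemma rhoM x y : M x -> M y -> rho (x *m y) = rho x *m rho y.
Proof. by case: Hrho => _ _ h _; apply: h. Qed.
Lemma rho_adj x : M x -> rho (adj x) = adj (rho x).
Proof. by case: Hrho => _ _ _ h; apply: h. Qed.

Lemma rho_Eb (y : 'M[C]_n) : rho y = \sum_(b0 < n * n) (cvec y) b0 0 *: rho (Eb b0).
Proof. by rewrite {1}(Eb_decomp y) (lin_sum rho_lin); apply: eq_bigr => b0 _; rewrite (linZ rho_lin). Qed.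

Lemma idx0 : (0 : 'I_(1 * 1)) = pidx (0 : 'I_1) (0 : 'I_1).
Proof. exact: val_inj. Qed.

Lemma unindex_pidx m p (i : 'I_m) (j : 'I_p) : mxtens_unindex (pidx i j) = (i, j).
Proof. exact: mxtens_indexK. Qed.

Definition U1 : 'M[C]_(d, (n * n) * d) :=
  \matrix_(r, q) rho (Eb (mxtens_unindex q).1) r (mxtens_unindex q).2.

Lemma U1_apply y (xi : 'cV[C]_d) : U1 *m (cvec y *t xi) = rho y *m xi.
Proof.
apply/matrixP=> r j; rewrite [j]ord1 !mxE sum_pidx.
under [RHS]eq_bigr => c _ do rewrite rho_Eb summxE mulr_suml.
rewrite [RHS]exchange_big; apply: eq_bigr => b0 _; apply: eq_bigr => c _.
rewrite idx0 tensE !mxE unindex_pidx /=.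
by rewrite -idx0 mulrCA mulrA.
Qed.

Lemma TA1 k' (c dd : 'I_k' -> 'M[C]_n) y (xi : 'cV[C]_d) :
  tmap pi rho (\sum_(s < k') (c s *t dd s)) *m (cvec y *t xi)
  = \sum_(s < k') (cvec (et (c s *m y)) *t (rho (dd s) *m xi)).
Proof.
rewrite (lin_sum (tmap_lin pi rho)) mulmx_suml; apply: eq_bigr => s _.
by rewrite (tmap_tens pi_lin rho_lin) tens_mul pi_cvec.
Qed.


#[local] Hint Resolve Nt_adj : mdb.

Definition P1 := tmap pi rho e.

Lemma P1_apply z (xi : 'cV[C]_d) :
  P1 *m (cvec z *t xi) = \sum_(t < k) (cvec (et (a t *m z)) *t (rho (b t) *m xi)).
Proof. by rewrite /P1 He TA1. Qed.

Lemma rho_sumZ (I : finType) (c : I -> C) (f : I -> 'M[C]_n) (xi : 'cV[C]_d) :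
  \sum_(i : I) c i *: (rho (f i) *m xi) = rho (\sum_(i : I) c i *: f i) *m xi.
Proof.
rewrite (lin_sum rho_lin) mulmx_suml; apply: eq_bigr => i _.
by rewrite (linZ rho_lin) scalemxAl.
Qed.

Lemma rho_sum2 k1 k2 (F : 'I_k1 -> 'I_k2 -> 'M[C]_n) (xi : 'cV[C]_d) :
  rho (\sum_(s < k1) \sum_(t < k2) F s t) *m xi = \sum_(t < k2) \sum_(s < k1) rho (F s t) *m xi.
Proof.
rewrite (lin_sum rho_lin) mulmx_suml.
under eq_bigr => s _ do rewrite (lin_sum rho_lin) mulmx_suml.
by rewrite exchange_big.
Qed.

Lemma UP1 z (xi : 'cV[C]_d) : Nt M D z -> U1 *m (P1 *m (cvec z *t xi)) = rho z *m xi.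
Proof.
move=> hz; rewrite P1_apply (mulmx_sumr U1).
transitivity (\sum_(t < k) rho (et (a t *m z) *m b t) *m xi).
  by apply: eq_bigr => t _; rewrite U1_apply mulmxA -rhoM; mt.
by rewrite -mulmx_suml -(lin_sum rho_lin) A1.
Qed.

Lemma ExpL (p : 'I_k -> 'M[C]_n) (eta : 'I_k -> 'cV[C]_d) : (forall t, M (p t)) ->
  \sum_(t < k) (cvec (et (p t)) *t eta t) =
  \sum_(r < k) (cvec (b r) *t \sum_(t < k) eps (a r *m p t) *: eta t).
Proof.
move=> hp; under eq_bigr => t _ do rewrite Tsum // cvec_sum tens_suml.
rewrite exchange_big; apply: eq_bigr => r _; rewrite tens_sumr; apply: eq_bigr => t _.
by rewrite cvecZ tensZl tensZr.
Qed.

Lemma VU1 z (xi : 'cV[C]_d) : Nt M D z ->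
  P1 *m (cvec 1%:M *t (rho z *m xi)) = P1 *m (cvec z *t xi).
Proof.
move=> hz; rewrite !P1_apply !ExpL => [|t|t]; try by mt.
apply: eq_bigr => r _; congr (_ *t _).
rewrite [RHS]rho_sumZ.
have -> : \sum_(t < k) eps (a r *m (a t *m 1%:M)) *: (rho (b t) *m (rho z *m xi))
  = rho ((\sum_(t < k) eps (a r *m a t) *: b t) *m z) *m xi.
  rewrite mulmx_suml (lin_sum rho_lin) mulmx_suml; apply: eq_bigr => t _.
  by rewrite mulmx1 -scalemxAl (linZ rho_lin) -scalemxAl rhoM ?mulmxA; mt.
by rewrite A4; mt.
Qed.

Lemma Iso1 z z' (xi xi' : 'cV[C]_d) : Nt M D z -> Nt M D z' ->
  (adj (P1 *m (cvec z' *t xi')) *m (G *t 1%:M) *m (P1 *m (cvec z *t xi))) 0 0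
  = (adj xi' *m rho (adj z' *m z) *m xi) 0 0.
Proof.
move=> hz hz'; rewrite -A3 //.
rewrite !P1_apply cadj_sum !mulmx_suml summxE.
rewrite (lin_sum rho_lin) mulmx_sumr mulmx_suml summxE; apply: eq_bigr => s _.
rewrite mulmx_sumr summxE (lin_sum rho_lin) mulmx_sumr mulmx_suml summxE; apply: eq_bigr => t _.
rewrite !cadj_tens !tens_mul idx0 tensE -idx0 G_form (linZ rho_lin) -scalemxAr -scalemxAl [RHS]mxE.
by congr (_ * _); rewrite mulmx1 cadjM rhoM ?rho_adj ?mulmxA; mt.
Qed.

Lemma Int1 x z (xi : 'cV[C]_d) : M x -> Nt M D z ->
  U1 *m (tmap pi rho (D x) *m (P1 *m (cvec z *t xi))) = rho x *m (U1 *m (P1 *m (cvec z *t xi))).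
Proof.
move=> hx hz; rewrite UP1 // [RHS]mulmxA -rhoM; try by mt.
have [k' [c [dd [hcd hD]]]] := DM hx.
rewrite -(A2 hx hz hcd hD) P1_apply rho_sum2 (mulmx_sumr (tmap pi rho (D x))) (mulmx_sumr U1).
apply: eq_bigr => t _; rewrite hD TA1 (mulmx_sumr U1).
apply: eq_bigr => s _; have [hc hd] := hcd s.
by rewrite U1_apply !mulmxA -!rhoM; mt.
Qed.

Definition P2 := tmap rho pi e.

Lemma TA2 k' (c dd : 'I_k' -> 'M[C]_n) y (xi : 'cV[C]_d) :
  tmap rho pi (\sum_(s < k') (c s *t dd s)) *m (xi *t cvec y)
  = \sum_(s < k') ((rho (c s) *m xi) *t cvec (et (dd s *m y))).
Proof.
rewrite (lin_sum (tmap_lin rho pi)) mulmx_suml; apply: eq_bigr => s _.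
by rewrite (tmap_tens rho_lin pi_lin) tens_mul pi_cvec.
Qed.

Lemma P2_apply z (xi : 'cV[C]_d) :
  P2 *m (xi *t cvec z) = \sum_(t < k) ((rho (a t) *m xi) *t cvec (et (b t *m z))).
Proof. by rewrite /P2 He TA2. Qed.

Definition U2 : 'M[C]_(d, d * (n * n)) :=
  \matrix_(r, q) rho (S (Eb (mxtens_unindex q).2)) r (mxtens_unindex q).1.

Lemma rhoS_Eb (y : 'M[C]_n) : rho (S y) = \sum_(b0 < n * n) (cvec y) b0 0 *: rho (S (Eb b0)).
Proof.
rewrite {1}(Eb_decomp y) (lin_sum Slin) (lin_sum rho_lin); apply: eq_bigr => b0 _.
by rewrite (linZ Slin) (linZ rho_lin).
Qed.

Lemma U2_apply y (xi : 'cV[C]_d) : U2 *m (xi *t cvec y) = rho (S y) *m xi.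
Proof.
apply/matrixP=> r j; rewrite [j]ord1 !mxE sum_pidx.
under [RHS]eq_bigr => c _ do rewrite rhoS_Eb summxE mulr_suml.
apply: eq_bigr => c _; apply: eq_bigr => b0 _.
rewrite idx0 tensE !mxE unindex_pidx /=.
by rewrite -idx0 [RHS]mulrAC [RHS]mulrC [X in _ * X = _]mulrC.
Qed.

Lemma UP2 z (xi : 'cV[C]_d) : Nt M D z -> U2 *m (P2 *m (xi *t cvec z)) = rho (S z) *m xi.
Proof.
move=> hz; rewrite P2_apply (mulmx_sumr U2).
transitivity (\sum_(t < k) rho (S (et (b t *m z)) *m a t) *m xi).
  by apply: eq_bigr => t _; rewrite U2_apply mulmxA -rhoM; mt.
by rewrite -mulmx_suml -(lin_sum rho_lin) A1'.
Qed.

Lemma ExpR (p : 'I_k -> 'M[C]_n) (eta : 'I_k -> 'cV[C]_d) : (forall t, M (p t)) ->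
  \sum_(t < k) (eta t *t cvec (et (p t))) =
  \sum_(r < k) ((\sum_(t < k) eps (a r *m p t) *: eta t) *t cvec (b r)).
Proof.
move=> hp; under eq_bigr => t _ do rewrite Tsum // cvec_sum tens_sumr.
rewrite exchange_big; apply: eq_bigr => r _; rewrite tens_suml; apply: eq_bigr => t _.
by rewrite cvecZ tensZl tensZr.
Qed.

Lemma VU2 z (xi : 'cV[C]_d) : Nt M D z ->
  P2 *m ((rho (S z) *m xi) *t cvec 1%:M) = P2 *m (xi *t cvec z).
Proof.
move=> hz; rewrite !P2_apply !ExpR => [|t|t]; try by mt.
apply: eq_bigr => r _; congr (_ *t _).
rewrite [RHS]rho_sumZ A4'; try by mt.
rewrite mulmx_suml (lin_sum rho_lin) mulmx_suml; apply: eq_bigr => t _.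
by rewrite mulmx1 -scalemxAl (linZ rho_lin) -scalemxAl rhoM ?mulmxA; mt.
Qed.

Lemma Iso2 z z' (xi xi' : 'cV[C]_d) : Nt M D z -> Nt M D z' ->
  (adj (P2 *m (xi' *t cvec z')) *m (1%:M *t G) *m (P2 *m (xi *t cvec z))) 0 0
  = (adj xi' *m rho (adj (S z') *m S z) *m xi) 0 0.
Proof.
move=> hz hz'; rewrite -A3' //.
rewrite !P2_apply cadj_sum !mulmx_suml summxE.
rewrite (lin_sum rho_lin) mulmx_sumr mulmx_suml summxE; apply: eq_bigr => s _.
rewrite mulmx_sumr summxE (lin_sum rho_lin) mulmx_sumr mulmx_suml summxE; apply: eq_bigr => t _.
rewrite !cadj_tens !tens_mul idx0 tensE -idx0 G_form (linZ rho_lin) -scalemxAr -scalemxAl [RHS]mxE.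
by rewrite mulrC; congr (_ * _); rewrite mulmx1 cadjM rhoM ?rho_adj ?mulmxA; mt.
Qed.

Lemma Int2 x z (xi : 'cV[C]_d) : M x -> Nt M D z ->
  U2 *m (tmap rho pi (D x) *m (P2 *m (xi *t cvec z))) = rho x *m (U2 *m (P2 *m (xi *t cvec z))).
Proof.
move=> hx hz; rewrite UP2 // [RHS]mulmxA -rhoM; try by mt.
have [k' [c [dd [hcd hD]]]] := DM hx.
rewrite -(A2' hx hz hcd hD) P2_apply rho_sum2 (mulmx_sumr (tmap rho pi (D x))) (mulmx_sumr U2).
apply: eq_bigr => t _; rewrite hD TA2 (mulmx_sumr U2).
apply: eq_bigr => s _; have [hc hd] := hcd s.
by rewrite U2_apply !mulmxA -!rhoM; mt.
Qed.

Local Notation r1 := (prod_rep D (counital_rep M D S eps) (hilb_rep rho)).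
Local Notation r2 := (prod_rep D (hilb_rep rho) (counital_rep M D S eps)).

Lemma space1 u : @rspace _ _ r1 u -> exists k' (x : 'I_k' -> 'M[C]_n) (v : 'I_k' -> 'cV[C]_d),
  (forall t, Nt M D (x t)) /\ u = P1 *m \sum_(t < k') (cvec (x t) *t v t).
Proof.
case=> w [[k' [u0 [v [hw ->]]]] ->].
have hex : forall t, exists y : 'M[C]_n, Nt M D y /\ u0 t = cvec y.
  by move=> t; case: (hw t) => -[y [h1 h2]] _; exists y.
have [x hx] := fin_all_exists hex.
exists k', x, v; split; first by move=> t; case: (hx t).
rewrite /P1 pi_unlock; congr (_ *m _); apply: eq_bigr => t _; by case: (hx t) => _ ->.
Qed.

Lemma space1_in k' (x : 'I_k' -> 'M[C]_n) (v : 'I_k' -> 'cV[C]_d) :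
  (forall t, Nt M D (x t)) -> @rspace _ _ r1 (P1 *m \sum_(t < k') (cvec (x t) *t v t)).
Proof.
move=> hx; exists (\sum_(t < k') (cvec (x t) *t v t)); split; last by rewrite /P1 pi_unlock.
exists k', (fun t => cvec (x t)), v; split => // t; split => //; by exists (x t).
Qed.

Lemma bilin_entry (m1 m2 p : nat) (A : 'I_m1 -> 'cV[C]_p) (B : 'M[C]_p) (Cc : 'I_m2 -> 'cV[C]_p) :
  (adj (\sum_(s < m1) A s) *m B *m (\sum_(t < m2) Cc t)) 0 0 =
  \sum_(s < m1) \sum_(t < m2) (adj (A s) *m B *m Cc t) 0 0.
Proof.
rewrite cadj_sum mulmx_suml mulmx_suml summxE; apply: eq_bigr => s _.
by rewrite mulmx_sumr summxE.
Qed.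

Lemma conj1 : unit_equiv M r1 (hilb_rep rho).
Proof.
exists U1; split.
- by [].
- move=> v _; exists (P1 *m \sum_(t < 1) (cvec (1%:M : 'M[C]_n) *t v)).
    by apply: (@space1_in 1 (fun _ => 1%:M) (fun _ => v)) => t; exact: Nt1.
  by rewrite big_ord1 UP1 ?rho1 ?mul1mx //; exact: Nt1.
- have key : forall u, @rspace _ _ r1 u -> P1 *m (cvec (1%:M : 'M[C]_n) *t (U1 *m u)) = u.
    move=> u /space1 [k' [x [v [hx ->]]]].
    rewrite (mulmx_sumr P1) (mulmx_sumr U1) tens_sumr (mulmx_sumr P1); apply: eq_bigr => t _.
    by rewrite UP1 // VU1.
  by move=> u u' hu hu' h; rewrite -(key u hu) h key.
- move=> u u' /space1 [k1 [x [v [hx ->]]]] /space1 [k2 [x' [v' [hx' ->]]]].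
  rewrite /ip /= !(mulmx_sumr P1) !(mulmx_sumr U1) !bilin_entry; apply: eq_bigr => s _; apply: eq_bigr => t _.
  rewrite Iso1 // !UP1 // mulmx1 cadjM rhoM ?rho_adj ?mulmxA; mt.
- move=> x u hx /space1 [k' [y [v [hy ->]]]].
  have -> : ract r1 x = tmap pi rho (D x) by rewrite pi_unlock.
  change (ract (hilb_rep rho) x) with (rho x).
  rewrite !(mulmx_sumr P1) !(mulmx_sumr U1) (mulmx_sumr (tmap pi rho (D x))) (mulmx_sumr U1) (mulmx_sumr (rho x)).
  by apply: eq_bigr => t _; rewrite Int1.
Qed.

Lemma space2 u : @rspace _ _ r2 u -> exists k' (x : 'I_k' -> 'M[C]_n) (v : 'I_k' -> 'cV[C]_d),
  (forall t, Nt M D (x t)) /\ u = P2 *m \sum_(t < k') (v t *t cvec (x t)).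
Proof.
case=> w [[k' [v [u0 [hw ->]]]] ->].
have hex : forall t, exists y : 'M[C]_n, Nt M D y /\ u0 t = cvec y.
  by move=> t; case: (hw t) => _ [y [h1 h2]]; exists y.
have [x hx] := fin_all_exists hex.
exists k', x, v; split; first by move=> t; case: (hx t).
rewrite /P2 pi_unlock; congr (_ *m _); apply: eq_bigr => t _; by case: (hx t) => _ ->.
Qed.

Lemma space2_in k' (x : 'I_k' -> 'M[C]_n) (v : 'I_k' -> 'cV[C]_d) :
  (forall t, Nt M D (x t)) -> @rspace _ _ r2 (P2 *m \sum_(t < k') (v t *t cvec (x t))).
Proof.
move=> hx; exists (\sum_(t < k') (v t *t cvec (x t))); split; last by rewrite /P2 pi_unlock.
exists k', v, (fun t => cvec (x t)); split => // t; split => //; by exists (x t).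
Qed.

Lemma conj2 : unit_equiv M r2 (hilb_rep rho).
Proof.
exists U2; split.
- by [].
- move=> v _; exists (P2 *m \sum_(t < 1) (v *t cvec (1%:M : 'M[C]_n))).
    by apply: (@space2_in 1 (fun _ => 1%:M) (fun _ => v)) => t; exact: Nt1.
  by rewrite big_ord1 UP2 ?(wk_S1 HW) ?rho1 ?mul1mx //; exact: Nt1.
- have key : forall u, @rspace _ _ r2 u -> P2 *m ((U2 *m u) *t cvec (1%:M : 'M[C]_n)) = u.
    move=> u /space2 [k' [x [v [hx ->]]]].
    rewrite (mulmx_sumr P2) (mulmx_sumr U2) tens_suml (mulmx_sumr P2); apply: eq_bigr => t _.
    by rewrite UP2 // VU2.
  by move=> u u' hu hu' h; rewrite -(key u hu) h key.
- move=> u u' /space2 [k1 [x [v [hx ->]]]] /space2 [k2 [x' [v' [hx' ->]]]].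
  rewrite /ip /= !(mulmx_sumr P2) !(mulmx_sumr U2) !bilin_entry; apply: eq_bigr => s _; apply: eq_bigr => t _.
  rewrite Iso2 // !UP2 // mulmx1 cadjM rhoM ?rho_adj ?mulmxA; mt.
- move=> x u hx /space2 [k' [y [v [hy ->]]]].
  have -> : ract r2 x = tmap rho pi (D x) by rewrite pi_unlock.
  change (ract (hilb_rep rho) x) with (rho x).
  rewrite !(mulmx_sumr P2) !(mulmx_sumr U2) (mulmx_sumr (tmap rho pi (D x))) (mulmx_sumr U2) (mulmx_sumr (rho x)).
  by apply: eq_bigr => t _; rewrite Int2.
Qed.
End Rep.
End Alg.

Theorem proposition2p2p1 (R : realType) (n : nat) (M : 'M[R[i]]_n -> Prop)
  (D : 'M[R[i]]_n -> 'M[R[i]]_(n * n)) (S : 'M[R[i]]_n -> 'M[R[i]]_n)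
  (eps : 'M[R[i]]_n -> R[i]) (HW : weak_Kac M D S eps)
  (d : nat) (rho : 'M[R[i]]_n -> 'M[R[i]]_d) (Hrho : unital_star_rep M rho) :
  unit_equiv M (prod_rep D (counital_rep M D S eps) (hilb_rep rho)) (hilb_rep rho) /\
  unit_equiv M (prod_rep D (hilb_rep rho) (counital_rep M D S eps)) (hilb_rep rho).
Proof.
have hM1 : M 1%:M by case: (wk_alg HW).
have [k [a [b [hab he]]]] := wk_DM HW hM1.
by split; [apply: (conj1 HW hab he Hrho) | apply: (conj2 HW hab he Hrho)].
Qed.
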